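(* Let $n>2$ be an integer, $p_1,\dots,p_n$ distinct primes, and $(X,r)$ an indecomposable multipermutation solution of the YBE with $|X|=p_1\cdots p_n$ and multipermutation level $n$. Then $|\mathcal G(X,r)|>p_1\cdots p_n$.
   Context: A solution of the Yang–Baxter equation (YBE) is a pair $(X,r)$, where $X$ is a non-empty set and $r\colon X\times X\to X\times X$, written $r(x,y)=(\sigma_x(y),\gamma_y(x))$, satisfies: $r^2=\mathrm{id}$; all $\sigma_x,\gamma_y$ are bijections of $X$; and $r_{12}r_{23}r_{12}=r_{23}r_{12}r_{23}$ on $X^3$, where $r_{12}=r\times\mathrm{id}_X$, $r_{23}=\mathrm{id}_X\times r$. $\mathcal G(X,r)=\langle\sigma_x:x\in X\rangle\le\mathrm{Sym}_X$; $(X,r)$ is indecomposable if $\mathcal G(X,r)$ is transitive on $X$. Retract: $x\sim y\iff\sigma_x=\sigma_y$, inducing a solution $\mathrm{Ret}(X,r)$ on $X/{\sim}$; $\mathrm{Ret}^k$ is the $k$-fold iterate; $(X,r)$ is multipermutation if $|\mathrm{Ret}^k(X,r)|=1$ for some $k\ge1$, the least such $k$ being its multipermutation level. *)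

(* Defs.v *)
From HB Require Import structures.
From mathcomp Require Import all_boot all_fingroup.
Set Implicit Arguments. Unset Strict Implicit. Unset Printing Implicit Defensive.
Local Open Scope group_scope.

(* Since X is finite, "sigma_x, gamma_y are bijections"
   is encoded by taking sigma, gamma : X -> {perm X}. *)
Section YBE.
Variable X : finType.
Variables (sigma gamma : X -> {perm X}).

Definition ybe_r (p : X * X) : X * X := (sigma p.1 p.2, gamma p.2 p.1).
Definition ybe_r12 (t : X * X * X) : X * X * X :=
  let: (x, y, z) := t in let: (u, v) := ybe_r (x, y) in (u, v, z).
Definition ybe_r23 (t : X * X * X) : X * X * X :=
  let: (x, y, z) := t in let: (v, w) := ybe_r (y, z) in (x, v, w).

Definition is_solution : Prop :=
  (forall p, ybe_r (ybe_r p) = p) /\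
  (forall t, ybe_r12 (ybe_r23 (ybe_r12 t)) = ybe_r23 (ybe_r12 (ybe_r23 t))).

Definition ybe_group : {set {perm X}} := <<[set sigma x | x : X]>>.

Definition indecomposable : Prop :=
  [transitive ybe_group, on [set: X] | 'P].

(* The equivalence ~_k on X whose classes are the points of Ret^k(X,r):
   x ~_0 y iff x = y;  x ~_{k+1} y iff sigma_x and sigma_y induce the same
   map on X/~_k, i.e. sigma_x(z) ~_k sigma_y(z) for all z.
   (~_1 is exactly sigma_x = sigma_y, the retract relation.) *)
Fixpoint ret_rel (k : nat) (x y : X) : bool :=
  match k with
  | 0 => x == y
  | k'.+1 => [forall z, ret_rel k' (sigma x z) (sigma y z)]
  end.

Definition ret_trivial (k : nat) : Prop := forall x y : X, ret_rel k x y.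

Definition multipermutation : Prop := exists k, (0 < k)%N /\ ret_trivial k.

Definition mp_level (n : nat) : Prop :=
  [/\ (0 < n)%N, ret_trivial n & forall k, (0 < k < n)%N -> ~ ret_trivial k].

End YBE.

(* Main.v *)
Require Import Defs.
From HB Require Import structures.
From mathcomp Require Import all_boot all_fingroup all_solvable.
Set Implicit Arguments. Unset Strict Implicit. Unset Printing Implicit Defensive.

Lemma arith (N d : nat) (u : nat -> nat) :
  d %| N -> (forall l, prime l -> ~~ (l * l %| N)) ->
  (forall k, coprime (u k) N) ->
  (forall k, k + u k = 1 + k * u 1 %[mod d]) -> u 1 = 1 %[mod d].
Proof.
move=> dN sqf cop E.
case: d dN E => [|[|d]] dN E.
- move: dN; rewrite dvd0n => /eqP N0; have := cop 1; rewrite N0 /coprime gcdn0.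
  by move/eqP->.
- by rewrite !modn1.
set d' := d.+2 in dN E *.
have u1pos : 0 < u 1.
  case u10 : (u 1) => //; have := cop 1; rewrite u10 /coprime gcd0n => /eqP N1.
  by move: dN; rewrite N1 dvdn1.
set c := (u 1).-1.
have u1E : u 1 = c.+1 by rewrite prednK.
suff dc : d' %| c.
  by rewrite u1E; case/dvdnP: dc => k ->; rewrite -addn1 modnMDl.
apply/negPn/negP => ndc.
set g := gcdn d' c.
have gd : g %| d' by apply: dvdn_gcdl.
set e := d' %/ g.
have dE : d' = e * g by rewrite divnK.
have e1 : 1 < e.
  rewrite ltnNge; apply/negP => e1.
  have : e = 0 \/ e = 1 by case: (e) e1 => [|[|]]; auto.
  case=> e01; first by move: dE; rewrite e01.
  by move: ndc; rewrite dE e01 mul1n dvdn_gcdr.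
set l := pdiv e.
have lp : prime l by apply: pdiv_prime.
have le : l %| e by apply: pdiv_dvd.
have ld : l %| d' by rewrite dE dvdn_mulr.
have lc : ~~ (l %| c).
  apply/negP => lc; move/negP: (sqf l lp); apply; apply: dvdn_trans dN.
  by rewrite dE mulnC dvdn_mul // dvdn_gcd ld lc.
have cpos : 0 < c by case: (c) lc => //; rewrite dvdn0.
have [m _ lm] := Bezoutl c (prime_gt0 lp).
have : coprime l c by rewrite prime_coprime.
move/eqP=> gl; rewrite gl in lm.
have Em := E m.
rewrite u1E mulnS addnCA in Em.
move/eqP: Em; rewrite eqn_modDl => /eqP Em.
have lu : l %| u m.
  rewrite /dvdn; apply/eqP.
  rewrite -(@modn_dvdm d' (u m) l ld) Em (@modn_dvdm d' _ l ld).
  by apply/eqP.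
have lN : l %| N by apply: dvdn_trans dN.
have := cop m; rewrite /coprime => /eqP gu.
have : l %| gcdn (u m) N by rewrite dvdn_gcd lu lN.
by rewrite gu dvdn1 => /eqP l1; move: lp; rewrite l1.
Qed.

Lemma prod_primes n (p : 'I_n -> nat) : (forall i, prime (p i)) -> injective p ->
  (forall l, prime l -> ~~ (l * l %| \prod_(i < n) p i)) /\
  (forall e, (forall i, p i %| e) -> \prod_(i < n) p i %| e).
Proof.
elim: n p => [|n IH] p pP pI.
  by rewrite big_ord0; split=> [l lp|e _]; rewrite ?dvdn1 ?dvd1n // -{1}[1]/(1*1) ?eqn_mul1;
    case: l lp => [|[|]].
rewrite big_ord_recr /=.
set p' := fun i : 'I_n => p (widen_ord (leqnSn n) i).
have -> : \prod_(i < n) p (widen_ord (leqnSn n) i) = \prod_(i < n) p' i by [].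
have p'P i : prime (p' i) by apply: pP.
have p'I : injective p'.
  by move=> i j /pI /(congr1 val) /= e; apply: val_inj.
have [IH1 IH2] := IH p' p'P p'I.
set q := p ord_max.
have qP : prime q by apply: pP.
have cop : coprime q (\prod_(i < n) p' i).
  rewrite prime_coprime // Euclid_dvd_prod // big_has; apply/hasP => -[i _].
  rewrite dvdn_prime2 // => /eqP /pI /(congr1 val) /=.
  by move=> e; move: (ltn_ord i); rewrite -e ltnn.
split.
  move=> l lp; apply/negP => ll.
  have [lq|lq] := eqVneq l q.
    move: ll; rewrite lq dvdn_pmul2r ?prime_gt0 // => qd.
    by move: cop; rewrite prime_coprime // qd.
  have clq : coprime (l * l) q.
    by rewrite coprimeMl andbb prime_coprime // dvdn_prime2 // lq.
  by move: ll; rewrite Gauss_dvdl // => /(negP (IH1 l lp)).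
move=> e he.
have cop' : coprime (\prod_(i < n) p' i) q by rewrite coprime_sym.
rewrite (Gauss_dvd _ cop') (he ord_max) andbT.
by apply: IH2 => i; apply: he.
Qed.

Local Open Scope group_scope.

Section Main.
Variable (X : finType) (sigma gamma : X -> {perm X}).
Hypothesis sol : is_solution sigma gamma.

Lemma cycE x y z :
  sigma x (sigma ((sigma x)^-1 y) z) = sigma y (sigma ((sigma y)^-1 x) z).
Proof.
case: sol => Hinv Hybe.
have Hg : forall a b, gamma b a = (sigma (sigma a b))^-1 a.
  move=> a b; have := Hinv (a, b); rewrite /ybe_r /= => -[e1 _].
  by apply: (@perm_inj _ (sigma (sigma a b))); rewrite permKV e1.
have H1 : forall a b c, sigma (sigma a b) (sigma (gamma b a) c) = sigma a (sigma b c).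
  move=> a b c; have := Hybe (a, b, c); rewrite /ybe_r12 /ybe_r23 /ybe_r /=.
  by case.
have := H1 x ((sigma x)^-1 y) z; rewrite permKV Hg permKV => ->.
done.
Qed.

Local Notation G := (ybe_group sigma).
Hypothesis trans : indecomposable sigma.
Variable x0 : X.
Hypothesis reg : forall g h, g \in G -> h \in G -> g x0 = h x0 -> g = h.

Lemma sigmaG x : sigma x \in G.
Proof. by apply: mem_gen; apply: imset_f. Qed.

Definition gx y : {perm X} := odflt 1 [pick g in G | g x0 == y].

Lemma gx_spec y : gx y \in G /\ gx y x0 = y.
Proof.
have: y \in orbit 'P G x0 by rewrite (atransP trans) ?inE.
case/orbitP => g gG <-; rewrite /gx; case: pickP => [h /andP[hG /eqP ->]|/(_ g)] //=.
by rewrite gG eqxx.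
Qed.

Lemma gxG y : gx y \in G. Proof. by case: (gx_spec y). Qed.
Lemma gxE y : gx y x0 = y. Proof. by case: (gx_spec y). Qed.

Lemma gx_uniq g : g \in G -> gx (g x0) = g.
Proof. by move=> gG; apply: reg => //; [apply: gxG | rewrite gxE]. Qed.

Lemma gxM g y : g \in G -> gx (g y) = gx y * g.
Proof.
move=> gG; apply: reg; [apply: gxG | by rewrite groupM ?gxG |].
by rewrite gxE permM gxE.
Qed.

Lemma gx0 : gx x0 = 1.
Proof. by rewrite -(perm1 x0) gx_uniq ?group1 // perm1. Qed.

Definition rho z y := gx y (sigma ((gx y)^-1 z) x0).

Lemma rho_g z g : g \in G -> rho z (g x0) = g (sigma (g^-1 z) x0).
Proof. by move=> gG; rewrite /rho gx_uniq. Qed.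

Lemma rho_conj g z y : g \in G -> g (rho z y) = rho (g z) (g y).
Proof.
move=> gG; rewrite /rho gxM // permM invMg permM permK.
done.
Qed.

Lemma rho_comm z z' y : rho z (rho z' y) = rho z' (rho z y).
Proof.
rewrite {2 4}/rho.
set a := gx y.
have aG : a \in G by apply: gxG.
rewrite -!permM !rho_g ?groupM ?sigmaG //.
rewrite !invMg !permM.
by rewrite cycE.
Qed.

Lemma rho_closed (Q : {set X}) p : p \in Q ->
  (forall z y, y \in Q -> rho z y \in Q) -> forall y, y \in Q.
Proof.
move=> pQ Qcl.
pose Q' := [set y | gx p y \in Q].
have Q'cl z y : y \in Q' -> rho z y \in Q'.
  by rewrite !inE rho_conj ?gxG //; apply: Qcl.
have x0Q' : x0 \in Q' by rewrite inE gxE.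
pose P := [set g in G | g x0 \in Q'].
have Pcl w g : g \in P -> sigma w * g \in P.
  rewrite inE => /andP[gG gQ]; rewrite inE groupM ?sigmaG //= permM.
  have := Q'cl (g w) _ gQ; rewrite rho_g // permK //.
pose H := [set h | [forall g in P, h * g \in P]].
have gH : group_set H.
  apply/group_setP; split.
    by rewrite inE; apply/forall_inP => g gP; rewrite mul1g.
  move=> h1 h2; rewrite !inE => /forall_inP H1 /forall_inP H2.
  by apply/forall_inP => g gP; rewrite -mulgA; apply: H1; apply: H2.
have GH : G \subset Group gH.
  rewrite gen_subG; apply/subsetP => s /imsetP[w _ ->].
  by rewrite inE; apply/forall_inP => g; apply: Pcl.
move=> y.
set g := gx ((gx p)^-1 y).
have gH' : g \in H by apply: (subsetP GH); apply: gxG.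
have P1 : 1 \in P by rewrite inE group1 perm1.
move: gH'; rewrite inE => /forall_inP /(_ 1 P1); rewrite mulg1 inE => /andP[_].
by rewrite inE /g gxE permKV.
Qed.

Lemma rho_inj z : injective (rho z).
Proof.
have H : {in [set: X] &, injective (rho z)}.
  apply/imset_injP.
  suff -> : rho z @: [set: X] = [set: X] by [].
  apply/setP => y; rewrite inE.
  apply: (@rho_closed _ (rho z x0)); first by apply: imset_f; rewrite inE.
  move=> z' _ /imsetP[y' _ ->]; rewrite rho_comm; apply: imset_f; by rewrite inE.
by move=> a b; apply: H; rewrite inE.
Qed.

Definition rhoP z : {perm X} := perm (@rho_inj z).
Lemma rhoPE z y : rhoP z y = rho z y. Proof. by rewrite permE. Qed.

Lemma rhoP_conj g z : g \in G -> rhoP z ^ g = rhoP (g z).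
Proof.
move=> gG; apply/permP => y; rewrite conjgE !permM !rhoPE rho_conj //.
by rewrite permKV.
Qed.

Definition Aset := [set rhoP z | z : X].
Local Notation A := <<Aset>>.

Lemma rhoA z : rhoP z \in A. Proof. by apply: mem_gen; apply: imset_f. Qed.

Lemma A_abelian : abelian A.
Proof.
rewrite abelian_gen; apply/centsP => a /imsetP[z _ ->] b /imsetP[z' _ ->].
by apply/permP => y; rewrite !permM !rhoPE rho_comm.
Qed.

Lemma A_conj a g : a \in A -> g \in G -> a ^ g \in A.
Proof.
move=> aA gG.
have : A \subset A :^ g^-1.
  rewrite gen_subG; apply/subsetP => s /imsetP[z _ ->].
  by rewrite mem_conjg invgK rhoP_conj // rhoA.
by move/subsetP/(_ a aA); rewrite mem_conjg invgK.
Qed.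

Lemma A_trans y : exists2 a, a \in A & a x0 = y.
Proof.
have : y \in [set (a : {perm X}) x0 | a in A].
  apply: (@rho_closed _ x0); first by apply/imsetP; exists 1; rewrite ?group1 ?perm1.
  move=> z y' /imsetP[a aA ->]; apply/imsetP; exists (a * rhoP z).
    by rewrite groupM ?rhoA.
  by rewrite permM rhoPE.
by case/imsetP => a aA ->; exists a.
Qed.

Lemma A_reg a b : a \in A -> b \in A -> a x0 = b x0 -> a = b.
Proof.
move=> aA bA e; apply/permP => y.
have [c cA <-] := A_trans y.
have cab : commute c a by apply: (centsP A_abelian).
have cbb : commute c b by apply: (centsP A_abelian).
by rewrite -!permM cab cbb !permM e.
Qed.

Lemma card_A : #|A| = #|X|.
Proof.
have <- : #|[set (a : {perm X}) x0 | a in A]| = #|A|.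
  by apply: card_in_imset => a b aA bA /= e; apply: A_reg.
suff -> : [set (a : {perm X}) x0 | a in A] = [set: X] by rewrite cardsT.
apply/setP => y; rewrite inE.
by have [a aA <-] := A_trans y; apply: imset_f.
Qed.

Hypothesis cycA : forall H : {group {perm X}}, abelian H -> #|H| = #|X| -> cyclic H.
Local Notation N := #|X|.

Definition alpha : {perm X} := odflt 1 [pick a | A == <[a]>].

Lemma alphaE : A = <[alpha]>.
Proof.
have := cycA A_abelian card_A; case/cyclicP => a Ha.
by rewrite /alpha; case: pickP => [b /eqP // | /(_ a)]; rewrite Ha eqxx.
Qed.

Lemma ord_alpha : #[alpha] = N.
Proof. by rewrite /order -alphaE card_A. Qed.

Lemma alphaA : alpha \in A. Proof. by rewrite alphaE cycle_id. Qed.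

Lemma N_gt0 : 0 < N. Proof. by apply/card_gt0P; exists x0. Qed.

Definition W g := oapp val 0 [pick k : 'I_#[alpha] | alpha ^ g == alpha ^+ k].

Lemma WE g : g \in G -> alpha ^ g = alpha ^+ W g.
Proof.
move=> gG; have : alpha ^ g \in <[alpha]> by rewrite -alphaE A_conj ?alphaA.
case/cyclePmin => k klt e.
by rewrite /W; case: pickP => [j /eqP //| /(_ (Ordinal klt))]; rewrite e eqxx.
Qed.

Lemma WA g a : g \in G -> a \in A -> a ^ g = a ^+ W g.
Proof.
move=> gG; rewrite alphaE => /cycleP[j ->].
by rewrite conjXg WE // -!expgnA mulnC.
Qed.

Lemma Wcop g : g \in G -> coprime (W g) N.
Proof.
move=> gG; have := orderJ alpha g; rewrite WE // orderXgcd ord_alpha.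
have gd : gcdn N (W g) %| N by apply: dvdn_gcdl.
move=> e; rewrite /coprime gcdnC; apply/eqP.
have := divnK gd; rewrite e => /eqP; rewrite -[X in _ == X]muln1 eqn_pmul2l ?N_gt0 //.
by move/eqP.
Qed.

Lemma WM g h : g \in G -> h \in G -> W (g * h) = W g * W h %[mod N].
Proof.
move=> gG hG; apply/eqP; rewrite -ord_alpha -eq_expg_mod_order.
by rewrite -WE ?groupM // conjgM WE // conjXg WE // -expgnA mulnC.
Qed.

Lemma W1 : W 1 = 1 %[mod N].
Proof. by apply/eqP; rewrite -ord_alpha -eq_expg_mod_order -WE // conjg1. Qed.

Lemma Wcent g a : g \in G -> W g = 1 %[mod N] -> a \in A -> a ^+ W g = a.
Proof.
move=> gG e; rewrite alphaE => /cycleP[j ->].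
rewrite -expgnA; apply/eqP; rewrite eq_expg_mod_order ord_alpha.
by rewrite -modnMmr e modnMmr muln1.
Qed.

Lemma Waff g a : g \in G -> a \in A -> g (a x0) = (a ^+ W g) (g x0).
Proof. by move=> gG aA; rewrite -WA // conjgE !permM permK. Qed.

Definition D := [set a in A | W (gx (a x0)) == 1 %[mod N]].

Lemma D_group : group_set D.
Proof.
apply/group_setP; split.
  by rewrite inE group1 perm1 gx0; apply/eqP; apply: W1.
move=> a b; rewrite !inE => /andP[aA /eqP Wa] /andP[bA /eqP Wb]; rewrite groupM //=.
set c := gx (a x0).
have cG : c \in G by apply: gxG.
have Hc : c (b x0) = (a * b) x0 by rewrite Waff // Wcent // gxE permM.
apply/eqP; rewrite -Hc gxM // WM ?gxG // -modnMm Wb Wa modnMm.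
done.
Qed.

Canonical DG := Group D_group.

Lemma DA : D \subset A. Proof. by apply/subsetP => a; rewrite inE => /andP[]. Qed.

Lemma Dcong a b : a \in A -> b \in A ->
  W (gx (a x0)) = W (gx (b x0)) %[mod N] -> a * b^-1 \in D.
Proof.
move=> aA bA eW.
set e := gx (b x0).
have eG : e \in G by apply: gxG.
have [be beA bex] := A_trans (e^-1 (a x0)).
have beD : be \in D.
  rewrite inE beA bex gxM ?groupV // WM ?gxG ?groupV //.
  rewrite -modnMml eW modnMml -WM ?groupV // mulgV; apply/eqP; apply: W1.
have ae : a = b * be ^+ W e.
  apply: A_reg => //; first by rewrite groupM ?groupX.
  by rewrite permM -{1}(gxE (b x0)) -/e -Waff // bex permKV.
have cbb : commute b (be ^+ W e).
  by apply: (centsP A_abelian); rewrite ?groupX.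
by rewrite ae cbb -mulgA mulgV mulg1 groupX.
Qed.

Lemma alphaN : alpha \in 'N(D).
Proof. by apply: (subsetP (sub_abelian_norm A_abelian DA)); apply: alphaA. Qed.

Local Notation d := #[coset DG alpha].

Lemma Dmod m m' : (alpha ^+ m * (alpha ^+ m')^-1 \in D) = (m == m' %[mod d]).
Proof.
have aN := alphaN.
have xN : alpha ^+ m * (alpha ^+ m')^-1 \in 'N(D) by rewrite groupM ?groupV ?groupX.
rewrite -eq_expg_mod_order eq_mulgV1 -!morphX // -morphV ?groupX // -morphM ?groupV ?groupX //.
apply/idP/idP => [xD|/eqP x1]; first by apply/eqP; apply: coset_id.
by apply: coset_idr.
Qed.

Lemma d_dvd : d %| N.
Proof. by rewrite -ord_alpha; apply: morph_order; apply: alphaN. Qed.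

Definition u k := W (gx ((alpha ^+ k) x0)).

Lemma gx_alpha j k :
  gx ((alpha ^+ j) x0) ((alpha ^+ k) x0) = (alpha ^+ (j + k * u j)) x0.
Proof.
by rewrite Waff ?gxG ?groupX ?alphaA // gxE -expgnA expgD permM.
Qed.

Lemma u_mul j k : u (j + k * u j) = u k * u j %[mod N].
Proof.
by rewrite /u -gx_alpha gxM ?gxG // WM ?gxG.
Qed.

Lemma Ek k : k + u k = 1 + k * u 1 %[mod d].
Proof.
apply/eqP; rewrite -Dmod; apply: Dcong; rewrite ?groupX ?alphaA //.
have := u_mul k 1; rewrite mul1n /u => ->.
have := u_mul 1 k; rewrite /u => ->.
by rewrite mulnC.
Qed.

Hypothesis sqf : forall l, prime l -> ~~ (l * l %| N).

Lemma u1d : u 1 = 1 %[mod d].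
Proof.
apply: (@arith N) => //; first by apply: d_dvd.
  by move=> k; apply: Wcop; apply: gxG.
by apply: Ek.
Qed.

Lemma Wd g : g \in G -> W g = 1 %[mod d].
Proof.
move=> gG.
have [a aA ax] := A_trans (g x0).
move: aA; rewrite alphaE => /cycleP[k ak]; rewrite ak in ax.
have -> : g = gx ((alpha ^+ k) x0) by rewrite ax gx_uniq.
apply/eqP; rewrite -(eqn_modDl k) -/(u k); apply/eqP.
by rewrite Ek -modnDmr -modnMmr u1d modnMmr modnDmr muln1 addnC.
Qed.

Lemma rho_x0 z : rho z x0 = sigma z x0.
Proof. by rewrite /rho gx0 invg1 !perm1. Qed.

Lemma sigma_gx z : sigma z = gx (rhoP z x0).
Proof. by rewrite rhoPE rho_x0 gx_uniq ?sigmaG. Qed.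

Lemma Wsig x : W (sigma x) = W (sigma x0) %[mod N].
Proof.
set r := rhoP x0.
have rA : r \in A by apply: rhoA.
have rxE : rhoP x = r ^+ W (gx x).
  by rewrite -WA ?gxG // /r rhoP_conj ?gxG // gxE.
set del := rhoP x * r^-1.
have delD : del \in D.
  move: rA; rewrite alphaE => /cycleP[i ri].
  rewrite /del rxE ri -expgnA Dmod.
  by rewrite -modnMmr Wd ?gxG // modnMmr muln1.
have delA : del \in A by apply: (subsetP DA).
have rx : rhoP x = del * r by rewrite /del mulgKV.
rewrite !sigma_gx rx.
set c := gx (del x0).
have cG : c \in G by apply: gxG.
have Wc : W c = 1 %[mod N] by move: delD; rewrite inE => /andP[_ /eqP].
have Hc : c (r x0) = (del * r) x0 by rewrite Waff // Wcent // gxE permM.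
by rewrite -Hc gxM // WM ?gxG // -modnMmr Wc modnMmr muln1.
Qed.

Lemma ret2 : ret_trivial sigma 2.
Proof.
move=> x y /=; apply/forallP => z; apply/forallP => w; apply/eqP.
suff -> : sigma (sigma x z) = sigma (sigma y z) by [].
rewrite (sigma_gx (sigma x z)) (sigma_gx (sigma y z)); congr (gx (_ x0)).
rewrite -(rhoP_conj z (sigmaG x)) -(rhoP_conj z (sigmaG y)) !WA ?sigmaG ?rhoA //.
have : rhoP z \in <[alpha]> by rewrite -alphaE rhoA.
case/cycleP => i ->; rewrite -!expgnA.
have e : i * W (sigma x) = i * W (sigma y) %[mod N].
  by rewrite -modnMmr Wsig modnMmr -[RHS]modnMmr Wsig modnMmr.
have := eq_expg_mod_order alpha (i * W (sigma x)) (i * W (sigma y)).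
rewrite ord_alpha e eqxx => h. by rewrite (eqP h).
Qed.
End Main.


Lemma dvd_prod_i n (p : 'I_n -> nat) i : p i %| \prod_(j < n) p j.
Proof. by rewrite (bigD1 i) //= dvdn_mulr. Qed.

Lemma cyc_sqf (gT : finGroupType) (H : {group gT}) n (p : 'I_n -> nat) :
  (forall i, prime (p i)) -> injective p -> abelian H ->
  #|H| = (\prod_(i < n) p i)%N -> cyclic H.
Proof.
move=> pP pI aH cH.
have [x xH ex] := exponent_witness (abelian_nil aH).
have eH : exponent H = #|H|.
  apply/eqP; rewrite eqn_dvd exponent_dvdn /= cH.
  apply: (proj2 (prod_primes pP pI)) => i.
  have : p i \in primes (exponent H).
    rewrite primes_exponent mem_primes pP cardG_gt0 cH dvd_prod_i.
    done.
  by rewrite mem_primes => /and3P[].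
apply/cyclicP; exists x; apply/eqP; rewrite eq_sym eqEcard cycle_subG xH /=.
by rewrite -/(order x) -ex eH.
Qed.

Unset Implicit Arguments.
Theorem mainTheorem10 (n : nat) (p : 'I_n -> nat) (X : finType)
    (sigma gamma : X -> {perm X}) :
  (2 < n)%N ->
  (forall i, prime (p i)) ->
  injective p ->
  is_solution sigma gamma ->
  indecomposable sigma ->
  #|X| = (\prod_(i < n) p i)%N ->
  multipermutation sigma ->
  mp_level sigma n ->
  (\prod_(i < n) p i < #|ybe_group sigma|)%N.
Proof.
move=> n2 pP pI sol trans cX _ [_ _ lev].
rewrite ltnNge; apply/negP => Gle.
have [x0 _] : exists x0 : X, true.
  have : (0 < #|X|)%N by rewrite cX prodn_gt0 // => i; apply: prime_gt0.
  by case/card_gt0P => x _; exists x.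
have reg : forall g h, g \in ybe_group sigma -> h \in ybe_group sigma ->
    g x0 = h x0 -> g = h.
  have surj : [set (g : {perm X}) x0 | g in ybe_group sigma] = [set: X].
    apply/setP => y; rewrite inE.
    have : y \in orbit 'P (ybe_group sigma) x0 by rewrite (atransP trans) ?inE.
    by case/orbitP => g gG <-; apply: imset_f.
  have : {in ybe_group sigma &, injective (fun g : {perm X} => g x0)}.
    apply/imset_injP; rewrite surj cardsT eqn_leq cX Gle andbT.
    by have := leq_imset_card (fun g : {perm X} => g x0) (ybe_group sigma); rewrite surj cardsT cX.
  by move=> inj g h gG hG e; apply: inj.
apply: (lev 2); first by rewrite /= n2.
apply: (ret2 sol trans reg).
  by move=> H aH cH; apply: (cyc_sqf pP pI aH); rewrite cH cX.
by rewrite cX; apply: (proj1 (prod_primes pP pI)).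
Qed.
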